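(* Let $\Phi$ be a first-order sentence, $A$ a unary predicate, $R$ a binary predicate, and $U$ and $B$ fresh unary and binary predicates, respectively, that do not occur in $\Phi$, and let $r,k$ be non-negative integers with $0 \le r < k$. Define $\Upsilon_1 = \forall x\, \exists^{=r, k} y : B(x, y)$, $\Upsilon_2 = (|U| = r)$, $\Upsilon_3 = \forall x \forall y : (A(x) \land B(x, y) \to U(y))$, $\Upsilon_4 = \forall x \forall y : \neg A(x) \to (B(x, y) \leftrightarrow R(x, y))$. Extend the weighting functions $(w,\bar w)$ by $w(U)=\bar w(U)=w(B)=\bar w(B)=1$. Then for every domain size $n$ with $r,k<n$, $$\mathsf{WFOMC}\big(\Phi \land \forall x : (A(x) \lor \exists^{=r,k} y : R(x, y)), n, w, \bar{w}\big) = \frac{1}{\binom{n}{r}} \mathsf{WFOMC}(\Phi \land \Upsilon_1 \land \Upsilon_2 \land \Upsilon_3 \land \Upsilon_4, n, w, \bar{w}).$$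
   Context: Function-free first-order logic over the domain $[n]=\{1,\dots,n\}$. $\exists^{=r,k} y:\phi(y)$ holds iff the number of domain elements $c$ with $\phi(c)$ is congruent to $r$ modulo $k$. $|U|=r$ is a cardinality constraint: exactly $r$ ground atoms $U(c)$ are true. A weighting is a pair of functions $w,\bar w$ from predicates to $\mathbb{R}$; the weight of a model (set of ground literals) is the product of $w(P)$ over its true ground literals of predicate $P$ and $\bar w(P)$ over its false ones; $\mathsf{WFOMC}(\Gamma,n,w,\bar w)$ is the sum of the weights of all models of $\Gamma$ over $[n]$. *)

(* Defs.v *)
From mathcomp Require Import all_boot all_order all_algebra.
Set Implicit Arguments. Unset Strict Implicit. Unset Printing Implicit Defensive.
Import Order.TTheory GRing.Theory Num.Theory.

(* A predicate symbol: (name, arity). *)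
Definition psym := (nat * nat)%type.
Definition arity (P : psym) : nat := P.2.

Inductive fol_form : Type :=
| Atom (P : psym) (xs : seq nat)
| Eq (x y : nat)
| Top | Bot
| Neg (f : fol_form)
| And (f g : fol_form) | Or (f g : fol_form) | Imp (f g : fol_form) | Iff (f g : fol_form)
| All (x : nat) (f : fol_form)
| Ex (x : nat) (f : fol_form)
| CntMod (x r k : nat) (f : fol_form)
| Card (P : psym) (r : nat).

Fixpoint occ (f : fol_form) : seq psym :=
  match f with
  | Atom P _ => [:: P]
  | Eq _ _ | Top | Bot => [::]
  | Neg g | All _ g | Ex _ g | CntMod _ _ _ g => occ g
  | And g h | Or g h | Imp g h | Iff g h => occ g ++ occ h
  | Card P _ => [:: P]
  end.
Definition voc (f : fol_form) : seq psym := undup (occ f).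

Fixpoint fv (f : fol_form) : seq nat :=
  match f with
  | Atom _ xs => xs
  | Eq x y => [:: x; y]
  | Top | Bot | Card _ _ => [::]
  | Neg g => fv g
  | And g h | Or g h | Imp g h | Iff g h => fv g ++ fv h
  | All x g | Ex x g | CntMod x _ _ g => filter (predC1 x) (fv g)
  end.
Definition sentence (f : fol_form) : bool := fv f == [::].

Fixpoint wf (f : fol_form) : bool :=
  match f with
  | Atom P xs => size xs == arity P
  | Eq _ _ | Top | Bot | Card _ _ => true
  | Neg g | All _ g | Ex _ g | CntMod _ _ _ g => wf g
  | And g h | Or g h | Imp g h | Iff g h => wf g && wf h
  end.

Fixpoint is_FO (f : fol_form) : bool :=
  match f with
  | Atom _ _ | Eq _ _ | Top | Bot => true
  | Neg g | All _ g | Ex _ g => is_FO g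
  | And g h | Or g h | Imp g h | Iff g h => is_FO g && is_FO h
  | CntMod _ _ _ _ | Card _ _ => false
  end.

Definition dom (n : nat) : seq nat := iota 1 n.

Fixpoint tuples (n a : nat) : seq (seq nat) :=
  match a with
  | 0 => [:: [::]]
  | a'.+1 => [seq c :: t | c <- dom n, t <- tuples n a']
  end.

Definition interp := psym -> seq nat -> bool.

Definition upd (e : nat -> nat) (x c : nat) : nat -> nat :=
  fun z => if z == x then c else e z.

Fixpoint holds (n : nat) (I : interp) (e : nat -> nat) (f : fol_form) : bool :=
  match f with
  | Atom P xs => I P (map e xs)
  | Eq x y => e x == e y
  | Top => true
  | Bot => false
  | Neg g => ~~ holds n I e g
  | And g h => holds n I e g && holds n I e h
  | Or g h => holds n I e g || holds n I e h
  | Imp g h => holds n I e g ==> holds n I e h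
  | Iff g h => holds n I e g == holds n I e h
  | All x g => all (fun c => holds n I (upd e x c) g) (dom n)
  | Ex x g => has (fun c => holds n I (upd e x c) g) (dom n)
  | CntMod x r k g =>
      count (fun c => holds n I (upd e x c) g) (dom n) == r %[mod k]
  | Card P r => count (fun t => I P t) (tuples n (arity P)) == r
  end.

Definition gatoms (n : nat) (V : seq psym) : seq (psym * seq nat) :=
  [seq (P, t) | P <- V, t <- tuples n (arity P)].

(* all boolean sequences of length m: a model assigns a truth value to each
   ground atom (listed in gatoms order) *)
Fixpoint bools (m : nat) : seq (seq bool) :=
  match m with
  | 0 => [:: [::]]
  | m'.+1 => [seq b :: s | b <- [:: true; false], s <- bools m']
  end.

Definition interp_of (ga : seq (psym * seq nat)) (s : seq bool) : interp :=
  fun P t => nth false s (index (P, t) ga).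

Section WFOMC.
Variable R : realFieldType.
Local Open Scope ring_scope.

Definition model_weight (w wbar : psym -> R) (ga : seq (psym * seq nat))
  (s : seq bool) : R :=
  \prod_(a <- zip ga s) (if a.2 then w a.1.1 else wbar a.1.1).

(* the (default) environment is irrelevant for sentences *)
Definition env0 : nat -> nat := fun _ => 1%N.

Definition WFOMC (G : fol_form) (n : nat) (w wbar : psym -> R) : R :=
  let ga := gatoms n (voc G) in
  \sum_(s <- bools (size ga) | holds n (interp_of ga s) env0 G)
     model_weight w wbar ga s.
End WFOMC.

(* Main.v *)
Require Import Defs.
From mathcomp Require Import all_boot all_order all_algebra.
From Stdlib Require Import FunctionalExtensionality.
Import Order.TTheory GRing.Theory Num.Theory.
Local Open Scope ring_scope.

Lemma size_bools m s : s \in bools m -> size s = m.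
Proof.
elim: m s => [|m IH] s; first by rewrite inE => /eqP ->.
by case/allpairsP => -[b s'] [_ /= /IH Hs ->] /=; rewrite Hs.
Qed.

Lemma mem_bools m s : size s = m -> s \in bools m.
Proof.
elim: m s => [|m IH] [|b s] // [Hs].
apply/allpairsP; exists (b, s); split => //=; last exact: IH.
by case: b.
Qed.

Lemma uniq_bools m : uniq (bools m).
Proof.
elim: m => [|m IH] //.
apply: allpairs_uniq => //.
by move=> [b1 s1] [b2 s2] _ _ /= [-> ->].
Qed.

Lemma boolsS m : bools m.+1 = [seq b :: s | b <- [:: true; false], s <- bools m].
Proof. by []. Qed.

Section SSdef.
Variable R : realFieldType.
Variables (w wbar : psym -> R).

Definition SS (ga : seq (psym * seq nat)) (F : interp -> R) : R :=
  \sum_(s <- bools (size ga)) F (interp_of ga s) * model_weight w wbar ga s.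



Definition join (ga : seq (psym * seq nat)) (I1 I2 : interp) : interp :=
  fun P t => if (P, t) \in ga then I1 P t else I2 P t.

Lemma bools_sum_cat m1 m2 (G : seq bool -> R) :
  \sum_(s <- bools (m1 + m2)) G s =
  \sum_(s1 <- bools m1) \sum_(s2 <- bools m2) G (s1 ++ s2).
Proof.
elim: m1 G => [|m1 IH] G; first by rewrite add0n big_seq1.
rewrite addSn !boolsS !big_allpairs_dep; apply: eq_bigr => b _.
by rewrite IH.
Qed.

Lemma interp_of_cat ga1 ga2 s1 s2 : size s1 = size ga1 ->
  interp_of (ga1 ++ ga2) (s1 ++ s2) = join ga1 (interp_of ga1 s1) (interp_of ga2 s2).
Proof.
move=> Hs; apply: functional_extensionality => P.
apply: functional_extensionality => t.
rewrite /interp_of /join index_cat nth_cat Hs.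
case H: ((P, t) \in ga1); first by rewrite index_mem H.
by rewrite ltnNge leq_addr /= addKn.
Qed.

Lemma model_weight_cat ga1 ga2 s1 s2 : size s1 = size ga1 ->
  model_weight w wbar (ga1 ++ ga2) (s1 ++ s2) =
  model_weight w wbar ga1 s1 * model_weight w wbar ga2 s2.
Proof. by move=> Hs; rewrite /model_weight zip_cat // big_cat. Qed.

Lemma SS_cat ga1 ga2 F :
  SS (ga1 ++ ga2) F = SS ga1 (fun I1 => SS ga2 (fun I2 => F (join ga1 I1 I2))).
Proof.
rewrite /SS size_cat bools_sum_cat; apply: eq_big_seq => s1 /size_bools Hs1.
rewrite mulr_suml; apply: eq_big_seq => s2 _.
by rewrite interp_of_cat // model_weight_cat // mulrA mulrAC.
Qed.

Lemma SS_ext ga F G :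
  (forall s, s \in bools (size ga) -> F (interp_of ga s) = G (interp_of ga s)) ->
  SS ga F = SS ga G.
Proof. by move=> H; apply: eq_big_seq => s Hs; rewrite H. Qed.

Lemma SS_exchange ga gb (H : interp -> interp -> R) :
  SS ga (fun I1 => SS gb (fun I2 => H I1 I2)) =
  SS gb (fun I2 => SS ga (fun I1 => H I1 I2)).
Proof.
rewrite /SS; under eq_bigr do rewrite mulr_suml.
rewrite exchange_big; apply: eq_bigr => s2 _; rewrite mulr_suml.
by apply: eq_bigr => s1 _; rewrite mulrAC.
Qed.

Lemma SS_scale ga F c : SS ga (fun I => F I * c) = SS ga F * c.
Proof. by rewrite /SS mulr_suml; apply: eq_bigr => s _; rewrite mulrAC. Qed.

Lemma SS_swap l1 a l2 F : a \notin l1 ->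
  SS (l1 ++ a :: l2) F = SS (a :: (l1 ++ l2)) F.
Proof.
move=> Ha.
rewrite SS_cat.
transitivity (SS l1 (fun I1 => SS [:: a] (fun Ia => SS l2 (fun I2 =>
   F (join l1 I1 (join [:: a] Ia I2)))))).
  by apply: SS_ext => s _; exact: (SS_cat [:: a] l2 _).
rewrite SS_exchange.
transitivity (SS ([:: a] ++ (l1 ++ l2)) F); last by [].
rewrite SS_cat; apply: SS_ext => sa _; rewrite SS_cat.
apply: SS_ext => s1 _; apply: SS_ext => s2 _; congr F.
apply: functional_extensionality => P; apply: functional_extensionality => t.
rewrite /join !inE; case: eqP => [Hpa|_]; last by case: ifP.
by rewrite -Hpa in Ha; rewrite (negbTE Ha).
Qed.

Lemma SS_perm ga ga' F : uniq ga -> perm_eq ga ga' -> SS ga F = SS ga' F.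
Proof.
elim: ga ga' F => [|a ga IH] ga' F.
  by move=> _ /perm_size /esym /size0nil ->.
move=> Hu Hp.
have Ha : a \in ga' by rewrite -(perm_mem Hp) mem_head.
case: (splitPr Ha) Hp Hu => l1 l2 Hp Hu.
have Hu' : uniq (l1 ++ a :: l2) by rewrite -(perm_uniq Hp).
have Hal1 : a \notin l1.
  by move: Hu'; rewrite cat_uniq /= => /and3P [_ /norP [] ].
rewrite SS_swap //.
have Hp' : perm_eq ga (l1 ++ l2).
  rewrite -(perm_cons a); apply: (perm_trans Hp).
  by have := perm_catCA l1 [:: a] l2 ([:: a] ++ l1 ++ l2); rewrite perm_refl.
rewrite -[a :: ga]/([:: a] ++ ga) -[a :: (l1 ++ l2)]/([:: a] ++ (l1 ++ l2)) !SS_cat.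
apply: SS_ext => s _; apply: IH => //.
by case/andP: Hu.
Qed.

Lemma SS_one ga F : (forall a, a \in ga -> w a.1 = 1 /\ wbar a.1 = 1) ->
  SS ga F = \sum_(s <- bools (size ga)) F (interp_of ga s).
Proof.
move=> Hw; apply: eq_big_seq => s Hs.
rewrite /model_weight big1_seq ?mulr1 // => -[x b] /andP[_ Hx].
have Hx1 : x \in ga.
  rewrite -(@unzip1_zip _ _ ga s); last by rewrite (size_bools _ _ Hs).
  by apply: (map_f (fun p => p.1) Hx).
by have [-> ->] := Hw x Hx1; case: b {Hx}.
Qed.
End SSdef.
Arguments SS {R}.

Lemma holds_ext n f (I J : interp) e :
  (forall P t, P \in occ f -> I P t = J P t) -> holds n I e f = holds n J e f.
Proof.
elim: f e => //=.
- by move=> P xs e H; rewrite H // mem_head.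
- by move=> f IH e H; rewrite IH.
- by move=> f IHf g IHg e H; rewrite IHf ?IHg // => P t HP; apply: H; rewrite mem_cat HP ?orbT.
- by move=> f IHf g IHg e H; rewrite IHf ?IHg // => P t HP; apply: H; rewrite mem_cat HP ?orbT.
- by move=> f IHf g IHg e H; rewrite IHf ?IHg // => P t HP; apply: H; rewrite mem_cat HP ?orbT.
- by move=> f IHf g IHg e H; rewrite IHf ?IHg // => P t HP; apply: H; rewrite mem_cat HP ?orbT.
- by move=> x f IH e H; apply: eq_all => c; rewrite IH.
- by move=> x f IH e H; apply: eq_has => c; rewrite IH.
- by move=> x r k f IH e H; rewrite (eq_count (a2 := fun c => holds n J (upd e x c) f)) // => c; rewrite IH.
- by move=> P r e H; rewrite (eq_count (a2 := fun t => J P t)) // => t; rewrite H // mem_head.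
Qed.

Lemma interp_out ga s P t : (P, t) \notin ga -> size s = size ga ->
  interp_of ga s P t = false.
Proof. by move=> H Hs; rewrite /interp_of memNindex // nth_default // Hs. Qed.

Lemma interp_map ga (f : psym * seq nat -> bool) x : x \in ga ->
  interp_of ga (map f ga) x.1 x.2 = f x.
Proof.
case: x => P t Hx /=; rewrite /interp_of (nth_map (P, t)) ?index_mem //.
by rewrite nth_index.
Qed.

Lemma map_interp ga s : uniq ga -> size s = size ga ->
  map (fun x => interp_of ga s x.1 x.2) ga = s.
Proof.
move=> Hu Hs; apply: (@eq_from_nth _ false); first by rewrite size_map.
move=> i; rewrite size_map => Hi.
rewrite (nth_map (0%N, 0%N, [::])) // /interp_of.
by rewrite -surjective_pairing index_uniq.
Qed.

Lemma mem_gatoms n V x :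
  (x \in gatoms n V) = (x.1 \in V) && (x.2 \in tuples n (arity x.1)).
Proof.
apply/allpairsPdep/andP.
  by case=> P [t [HP Ht ->]].
by case: x => P t [HP Ht]; exists P, t.
Qed.

Lemma uniq_tuples n a : uniq (tuples n a).
Proof.
elim: a => [|a IH] //=.
apply: allpairs_uniq => //; first exact: iota_uniq.
by move=> [c1 t1] [c2 t2] _ _ /= [-> ->].
Qed.

Lemma uniq_gatoms n V : uniq V -> uniq (gatoms n V).
Proof.
elim: V => [|P V IH] //= /andP [HP HV].
rewrite cat_uniq map_inj_uniq ?uniq_tuples ?cats0; last by move=> t1 t2 [].
rewrite IH // andbT; apply/hasPn => x Hx; apply/mapP => -[t _ Ex].
by move: Hx; rewrite mem_gatoms Ex /= (negbTE HP).
Qed.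

Lemma tuples1 n : tuples n 1 = map (fun c => [:: c]) (dom n).
Proof. by rewrite /=; elim: (dom n) => //= c l ->. Qed.

Lemma mem_tuples2 n t : t \in tuples n 2 ->
  exists c d, [/\ c \in dom n, d \in dom n & t = [:: c; d]].
Proof.
case/allpairsPdep => c [t' [Hc Ht' ->]].
move: Ht'; rewrite -[X in _ \in X]/(tuples n 1) tuples1 => /mapP [d Hd ->].
by exists c, d.
Qed.

Lemma gatoms1 n U : arity U = 1%N ->
  gatoms n [:: U] = map (fun c => (U, [:: c])) (dom n).
Proof.
move=> HU; rewrite /gatoms /= cats0 HU tuples1 -map_comp.
by [].
Qed.

Lemma size_gatoms1 n U : arity U = 1%N -> size (gatoms n [:: U]) = n.
Proof. by move=> HU; rewrite gatoms1 // size_map size_iota. Qed.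

Lemma count_in_le (l : seq nat) (p q : pred nat) :
  {in l, forall x, p x -> q x} -> (count p l <= count q l)%N.
Proof.
elim: l => [|x l IH] //= H.
rewrite leq_add ?IH //; last by move=> y Hy; apply: H; rewrite inE Hy orbT.
by case Hp: (p x) => //; rewrite H // mem_head.
Qed.

Lemma count_in_eq (l : seq nat) (p q : pred nat) :
  {in l, forall x, p x -> q x} -> count p l = count q l -> {in l, forall x, p x = q x}.
Proof.
elim: l => [|x l IH] //= H Hc y.
have H' : {in l, forall x, p x -> q x} by move=> z Hz; apply: H; rewrite inE Hz orbT.
have Hle := count_in_le _ _ _ H'.
have Hpq : p x -> q x by apply: H; rewrite mem_head.
have Hx : p x = q x.
  case Hp: (p x); first by rewrite Hpq.
  case Hq: (q x) => //; move: Hc; rewrite Hp Hq /=.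
  by rewrite add0n add1n => E; move: Hle; rewrite E ltnn.
rewrite inE => /orP [/eqP ->|Hy] //.
apply: IH => //; move: Hc; rewrite Hx; exact: addnI.
Qed.

Lemma sum_bools_count (R : realFieldType) m r :
  \sum_(s <- bools m) ((count id s == r)%:R : R) = ('C(m, r))%:R.
Proof.
elim: m r => [|m IH] r; first by rewrite big_seq1; case: r.
rewrite boolsS big_allpairs_dep big_cons big_cons big_nil /= addr0.
have Et s : count id (true :: s) = (count id s).+1 by [].
have Ef s : count id (false :: s) = count id s by [].
under eq_bigr do rewrite add1n.
under [X in _ + X]eq_bigr do rewrite add0n.
case: r => [|r].
  by rewrite big1 ?add0r ?IH ?bin0 // => s _.
under eq_bigr do rewrite eqSS.
by rewrite !IH binS natrD addrC.
Qed.

Lemma comb n r k (a : nat -> bool) (rr b : nat -> nat -> bool) (u : nat -> bool) :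
  (r < k)%N ->
  [&& all (fun c => count (b c) (dom n) == r %[mod k]) (dom n),
      count u (dom n) == r,
      all (fun c => all (fun d => a c && b c d ==> u d) (dom n)) (dom n) &
      all (fun c => all (fun d => ~~ a c ==> (b c d == rr c d)) (dom n)) (dom n)]
  = [&& all (fun c => all (fun d => b c d == (if a c then u d else rr c d)) (dom n)) (dom n),
        all (fun c => a c || (count (rr c) (dom n) == r %[mod k])) (dom n) &
        count u (dom n) == r].
Proof.
move=> Hrk.
have Hrmod : (r %% k = r)%N by rewrite modn_small.
apply/idP/idP.
- case/and4P => /allP H1 /eqP H2 /allP H3 /allP H4.
  have Hb : forall c, c \in dom n -> {in dom n, forall d, b c d = (if a c then u d else rr c d)}.
    move=> c Hc; case Ha: (a c).
      have Hsub : {in dom n, forall d, b c d -> u d}.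
        by move=> d Hd Hbd; move/allP: (H3 c Hc) => /(_ d Hd); rewrite Ha Hbd.
      apply: count_in_eq => //.
      have Hle := count_in_le _ _ _ Hsub.
      move: (H1 c Hc); rewrite Hrmod H2 => /eqP Hm.
      rewrite H2 in Hle.
      by rewrite -Hm modn_small // (leq_ltn_trans Hle Hrk).
    by move=> d Hd; move/allP: (H4 c Hc) => /(_ d Hd); rewrite Ha => /eqP.
  apply/and3P; split; last by rewrite H2.
  + by apply/allP => c Hc; apply/allP => d Hd; rewrite Hb.
  + apply/allP => c Hc; case Ha: (a c) => //=.
    rewrite -(eq_in_count (a1 := b c)); first exact: H1.
    by move=> d Hd; rewrite Hb // Ha.
- case/and3P => /allP H1 /allP H2 /eqP H3.
  have Hb : forall c, c \in dom n -> {in dom n, forall d, b c d = (if a c then u d else rr c d)}.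
    by move=> c Hc d Hd; move/allP: (H1 c Hc) => /(_ d Hd) /eqP.
  apply/and4P; split.
  + apply/allP => c Hc; rewrite (eq_in_count (Hb c Hc)).
    case Ha: (a c); first by rewrite H3.
    by move: (H2 c Hc); rewrite Ha.
  + by rewrite H3.
  + apply/allP => c Hc; apply/allP => d Hd; rewrite Hb //.
    by case: (a c) => //=; case: (u d).
  + apply/allP => c Hc; apply/allP => d Hd; rewrite Hb //.
    by case: (a c); rewrite //= eqxx.
Qed.

Lemma WFOMC_SS (R : realFieldType) G n (w wbar : psym -> R) :
  WFOMC G n w wbar = SS w wbar (gatoms n (voc G)) (fun I => (holds n I env0 G)%:R).
Proof.
rewrite /WFOMC /SS big_mkcond; apply: eq_bigr => s _.
by case: ifP => _; rewrite ?mul1r ?mul0r.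
Qed.

Lemma sum_pick (R : realFieldType) (l : seq (seq bool)) s0 c :
  uniq l -> s0 \in l -> \sum_(s <- l) (((s == s0) && c)%:R : R) = c%:R.
Proof.
move=> Hu Hs0; rewrite (big_rem s0 Hs0) eqxx /= big1_seq ?addr0 //.
move=> s /andP [_ Hs]; suff -> : (s == s0) = false by [].
apply/eqP => E; move: Hs; rewrite E.
by rewrite mem_rem_uniqF.
Qed.

Theorem lemma3 (R : realFieldType) (Phi : fol_form) (A Rel U B : psym)
  (r k n : nat) (w wbar : psym -> R) :
  is_FO Phi -> sentence Phi -> wf Phi ->
  arity A = 1%N -> arity Rel = 2%N -> arity U = 1%N -> arity B = 2%N ->
  U \notin voc Phi -> B \notin voc Phi -> U != A -> B != Rel ->
  (r < k)%N -> (r < n)%N -> (k < n)%N ->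
  w U = 1 -> wbar U = 1 -> w B = 1 -> wbar B = 1 ->
  WFOMC (And Phi (All 0 (Or (Atom A [:: 0%N])
                            (CntMod 1 r k (Atom Rel [:: 0%N; 1%N]))))) n w wbar
  = ('C(n, r)%:R)^-1 *
    WFOMC (And Phi
            (And (All 0 (CntMod 1 r k (Atom B [:: 0%N; 1%N])))
            (And (Card U r)
            (And (All 0 (All 1 (Imp (And (Atom A [:: 0%N]) (Atom B [:: 0%N; 1%N]))
                                    (Atom U [:: 1%N]))))
                 (All 0 (All 1 (Imp (Neg (Atom A [:: 0%N]))
                                    (Iff (Atom B [:: 0%N; 1%N])
                                         (Atom Rel [:: 0%N; 1%N]))))))))) n w wbar.
Proof.
move=> _ _ _ HA HRel HU HB HUPhi HBPhi HUA HBRel Hrk Hrn Hkn wU wbU wB wbB.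
rewrite !WFOMC_SS.
set G1 := And Phi _.
set G2 := And Phi _.
have HAU : (A == U) = false by rewrite eq_sym; apply/negbTE.
have HAB : (A == B) = false by apply/eqP => E; move: HA; rewrite E HB.
have HRU : (Rel == U) = false by apply/eqP => E; move: HRel; rewrite E HU.
have HRB : (Rel == B) = false by rewrite eq_sym; apply/negbTE.
have HBU : (B == U) = false by apply/eqP => E; move: HB; rewrite E HU.
have HUB : (U == B) = false by rewrite eq_sym.
have HPhi P : P \in occ Phi -> (P == U) = false /\ (P == B) = false.
  move=> HP; split; apply/eqP => E.
    by move: HUPhi; rewrite -E /voc mem_undup HP.
  by move: HBPhi; rewrite -E /voc mem_undup HP.
have Hvoc1 P : (P \in voc G1) = [|| P \in occ Phi, P == A | P == Rel].
  by rewrite /voc mem_undup /= !mem_cat !inE.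
have Hvoc2 P : (P \in voc G2) = [|| P \in occ Phi, P == A, P == Rel, P == U | P == B].
  rewrite /voc mem_undup /= !mem_cat !inE.
  by case: (P \in occ Phi); case: (P == A); case: (P == B); case: (P == U); case: (P == Rel).
set ga1 := gatoms n (voc G1).
set gaU := gatoms n [:: U].
set gaB := gatoms n [:: B].
have HUv1 : (U \in voc G1) = false.
  by rewrite Hvoc1 eq_sym HAU eq_sym HRU !orbF; apply/negbTE; move: HUPhi; rewrite /voc mem_undup.
have HBv1 : (B \in voc G1) = false.
  by rewrite Hvoc1 eq_sym HAB eq_sym HRB !orbF; apply/negbTE; move: HBPhi; rewrite /voc mem_undup.
have Hu1 : uniq ga1 by apply: uniq_gatoms; apply: undup_uniq.
have HuU : uniq gaU by apply: uniq_gatoms.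
have HuB : uniq gaB by apply: uniq_gatoms.
have Hucat : uniq (ga1 ++ gaU ++ gaB).
  rewrite cat_uniq Hu1 cat_uniq HuU HuB /= andbT.
  apply/andP; split.
  - apply/hasPn => x; rewrite mem_cat !mem_gatoms !inE => /orP [] /andP [/eqP -> _];
      by rewrite ?HUv1 ?HBv1.
  - apply/hasPn => x; rewrite !mem_gatoms !inE => /andP [/eqP -> _].
    by rewrite HBU.
have Hperm : perm_eq (ga1 ++ gaU ++ gaB) (gatoms n (voc G2)).
  apply: uniq_perm => //; first by apply: uniq_gatoms; apply: undup_uniq.
  move=> x; rewrite mem_cat (mem_cat x gaU) /ga1 /gaU /gaB !mem_gatoms Hvoc1 Hvoc2 !mem_seq1.
  by case: (x.2 \in _); rewrite ?andbT ?andbF // -!orbA.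
rewrite -(SS_perm _ w wbar _ _ _ Hucat Hperm) SS_cat.
have Hinner : forall s1, s1 \in bools (size ga1) ->
  SS w wbar (gaU ++ gaB) (fun I2 => (holds n (join ga1 (interp_of ga1 s1) I2) env0 G2)%:R)
  = (holds n (interp_of ga1 s1) env0 G1)%:R * ('C(n, r))%:R.
  move=> s1 Hs1; have Hs1' := size_bools _ _ Hs1.
  set I1 := interp_of ga1 s1.
  rewrite SS_cat SS_one; last first.
    by move=> a; rewrite mem_gatoms mem_seq1 => /andP [/eqP -> _]; rewrite wU wbU.
  transitivity (\sum_(sU <- bools (size gaU)) (((holds n I1 env0 G1) && (count id sU == r))%:R : R)).
    apply: eq_big_seq => sU HsU; have HsU' := size_bools _ _ HsU.
    set IU := interp_of gaU sU.
    rewrite SS_one; last first.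
      by move=> a; rewrite mem_gatoms mem_seq1 => /andP [/eqP -> _]; rewrite wB wbB.
    set T := fun t : seq nat => if I1 A [:: nth 0%N t 0] then IU U [:: nth 0%N t 1] else I1 Rel t.
    set sB0 := map (fun x => T x.2) gaB.
    transitivity (\sum_(sB <- bools (size gaB)) ((((sB == sB0) && (holds n I1 env0 G1 && (count id sU == r))))%:R : R)); last first.
      apply: sum_pick; first exact: uniq_bools.
      by apply: mem_bools; rewrite size_map.
    apply: eq_big_seq => sB HsB; have HsB' := size_bools _ _ HsB.
    congr (_%:R).
    set IB := interp_of gaB sB.
    pose J' : interp := fun P t => if P == U then IU U t else if P == B then IB B t else I1 P t.
    rewrite (@holds_ext n G2 _ J'); last first.
      move=> P t _; rewrite /J' /join.
      case: eqP => [->|HPU].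
        rewrite mem_gatoms HUv1 /=.
        case HtU: ((U, t) \in gaU) => //.
        rewrite /IB interp_out //; last by rewrite mem_gatoms mem_seq1 HUB.
        by rewrite /IU interp_out // HtU.
      case: eqP => [->|HPB].
        rewrite mem_gatoms HBv1 /= mem_gatoms mem_seq1 HBU /=.
        by [].
      case Ht1: ((P, t) \in ga1) => //.
      rewrite mem_gatoms mem_seq1 (introF eqP HPU) /=.
      rewrite /IB interp_out //; last by rewrite mem_gatoms mem_seq1 (introF eqP HPB).
      by rewrite /I1 interp_out // Ht1.
    have HsBeq : (sB == sB0) = all (fun c => all (fun d => IB B [:: c; d] ==
        (if I1 A [:: c] then IU U [:: d] else I1 Rel [:: c; d])) (dom n)) (dom n).
      rewrite -{1}(map_interp _ _ HuB HsB') /sB0; apply/eqP/allP.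
      - move/eq_in_map => H c Hc; apply/allP => d Hd.
        have Hd1 : [:: d] \in tuples n 1 by rewrite tuples1 map_f.
        have Hx : (B, [:: c; d]) \in gaB.
          rewrite mem_gatoms mem_seq1 eqxx /= HB; apply/allpairsPdep.
          by exists c, [:: d].
        by have := H _ Hx; rewrite /= -/IB => ->; rewrite /T /= eqxx.
      - move=> H; apply/eq_in_map => -[P t]; rewrite mem_gatoms mem_seq1 => /andP [/= /eqP -> Ht] /=.
        rewrite HB in Ht; case: (mem_tuples2 _ _ Ht) => c [d [Hc Hd ->]].
        by move/allP: (H c Hc) => /(_ d Hd) /eqP; rewrite /IB => ->.
    have HcU : count id sU = count (fun d => IU U [:: d]) (dom n).
      have EgaU : gaU = map (fun c => (U, [:: c])) (dom n) by exact: gatoms1.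
      rewrite -{1}(map_interp _ _ HuU HsU') count_map -/IU EgaU count_map.
      by [].
    have HPhiI : holds n J' env0 Phi = holds n I1 env0 Phi.
      apply: holds_ext => P t HP; rewrite /J'; have [-> ->] := HPhi P HP; by [].
    rewrite /G2 /G1 /= /upd /= HPhiI HsBeq HcU /J' HAU HAB eqxx HRU HRB HBU HU tuples1 count_map.
    have := comb n r k (fun c => I1 A [:: c]) (fun c d => I1 Rel [:: c; d])
      (fun c d => IB B [:: c; d]) (fun d => IU U [:: d]) Hrk.
    rewrite /= => HC.
    rewrite !eqxx.
    case: (holds n I1 env0 Phi) => /=.
    - exact (congr1 nat_of_bool HC).
    - by rewrite andbF.
  rewrite size_gatoms1 //.
  case: (holds n I1 env0 G1); last by rewrite mul0r big1.
  by rewrite mul1r sum_bools_count.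
have -> : SS w wbar ga1 (fun I1 => SS w wbar (gaU ++ gaB)
      (fun I2 => (holds n (join ga1 I1 I2) env0 G2)%:R))
    = SS w wbar ga1 (fun I1 => (holds n I1 env0 G1)%:R * ('C(n, r))%:R).
  by apply: SS_ext => s1 Hs1; exact: Hinner.
rewrite SS_scale mulrCA mulVf ?mulr1 //.
by rewrite pnatr_eq0 -lt0n bin_gt0 ltnW.
Qed.
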